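(* Let $1\le r<n$, $d\le n$, and $\mu_0\ge 1$ be such that $d/(r\mu_0)$ is a positive integer, and let $m$ be a sampling budget. Let $\mathcal{X}$ be the set of $d\times n$ matrices of rank $r$ whose column space $U$ satisfies $\mu(U)\le\mu_0$. Let $\mathcal{Q}$ be the set of all probability distributions $q$ over lists of $m$ index pairs $(i,j)\in[d]\times[n]$, and $\mathcal{F}$ the set of all (possibly randomized) maps $f$ sending a list of indices $\Omega$ together with the values $X_\Omega$ of a matrix on those indices to a $d\times n$ matrix. Define $$R^\star=\inf_{f\in\mathcal{F}}\inf_{q\in\mathcal{Q}}\sup_{X\in\mathcal{X}}\Pr_{\Omega\sim q}\big[f(\Omega,X_\Omega)\ne X\big],$$ where the probability also accounts for randomness of $f$. Then $$R^\star\ \ge\ \frac12-\left\lceil\frac{m}{\left(1-\frac{r-1}{r\mu_0}\right)d}\right\rceil\frac{1}{2(n-r)}.$$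
   Context: For an $r$-dimensional subspace $U\subseteq\mathbb{R}^d$, its coherence is $\mu(U)=\frac{d}{r}\max_{i\in[d]}\|\mathcal{P}_U e_i\|_2^2$, where $\mathcal{P}_U$ is the orthogonal projection onto $U$. The sampling distribution $q$ is fixed before any entries are observed (passive, non-adaptive sampling). *)

(* Defs.v *)
From HB Require Import structures.
From mathcomp Require Import all_boot all_order all_algebra.
Set Implicit Arguments. Unset Strict Implicit. Unset Printing Implicit Defensive.
Import Order.TTheory GRing.Theory Num.Theory.
Local Open Scope ring_scope.

Section Defs.
Variable R : rcfType.

(* P (acting on column vectors of R^d) is the orthogonal projection onto the
   column space of X (= row space of X^T). *)
Definition is_orth_proj (d n : nat) (P : 'M[R]_d) (X : 'M[R]_(d, n)) : Prop :=
  P *m P = P /\ P^T = P /\ (P == X^T)%MS.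

Definition coherence_of_proj (d r : nat) (P : 'M[R]_d) : R :=
  d%:R / r%:R * \big[Num.max/0]_(i < d) \sum_(j < d) (P j i) ^+ 2.

Definition in_classX (d n r : nat) (mu0 : R) (X : 'M[R]_(d, n)) : Prop :=
  \rank X = r /\
  exists P : 'M[R]_d, is_orth_proj P X /\ coherence_of_proj r P <= mu0.

Definition is_distribution (d n m : nat)
    (q : {ffun m.-tuple ('I_d * 'I_n) -> R}) : Prop :=
  (forall Om, 0 <= q Om) /\ \sum_Om q Om = 1.

Definition observe (d n m : nat) (X : 'M[R]_(d, n)) (Om : m.-tuple ('I_d * 'I_n))
  : m.-tuple R := map_tuple (fun p => X p.1 p.2) Om.

(* A randomized estimator: for each input (Omega, X_Omega), f Om v M is the
   probability that the (randomized) output equals the matrix M, i.e. the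
   atom weights of the output law; they are nonnegative and any finite
   collection of distinct outputs has total weight <= 1. *)
Definition estimator (d n m : nat) :=
  m.-tuple ('I_d * 'I_n) -> m.-tuple R -> 'M[R]_(d, n) -> R.

Definition is_randomized_map (d n m : nat) (f : estimator d n m) : Prop :=
  forall Om v,
    (forall M, 0 <= f Om v M) /\
    (forall s : seq 'M[R]_(d, n), uniq s -> \sum_(M <- s) f Om v M <= 1).

Definition error_prob (d n m : nat) (f : estimator d n m)
    (q : {ffun m.-tuple ('I_d * 'I_n) -> R}) (X : 'M[R]_(d, n)) : R :=
  1 - \sum_Om q Om * f Om (observe X Om) X.

Definition is_ceil (x : R) (K : nat) : Prop := K%:R - 1 < x /\ x <= K%:R.

End Defs.

(* Main.v *)
Require Import Defs.
From HB Require Import structures.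
From mathcomp Require Import all_boot all_order all_algebra.
From mathcomp Require Import ring lra zify.
Import Order.TTheory GRing.Theory Num.Theory.
Local Open Scope ring_scope.
From Stdlib Require Import Classical.
Section Aux1.
Variable R : rcfType.

Lemma class_GC (d n r : nat) (mu0 b : R) (G : 'M[R]_(d,r)) (C : 'M[R]_(r,n))
  (c : 'rV[R]_r) :
  G^T *m G = diag_mx c -> (forall j, c 0 j != 0) -> C *m C^T = 1%:M ->
  (forall i, \sum_j G i j ^+ 2 / c 0 j <= b) -> 0 <= b ->
  d%:R / r%:R * b <= mu0 ->
  in_classX r mu0 (G *m C).
Proof.
move=> GG cn0 CC Gb b0 bmu.
pose D := diag_mx (map_mx (fun x => x^-1) c).
have DcD : D *m diag_mx c = 1%:M.
  apply/matrixP=> i j; rewrite mul_diag_mx !mxE.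
  case: (eqVneq i j) => [->|nij]; last by rewrite mulr0n mulr0.
  by rewrite !mulr1n mulVf.
have cD : diag_mx c *m D = 1%:M.
  apply/matrixP=> i j; rewrite mul_diag_mx !mxE.
  case: (eqVneq i j) => [->|nij]; last by rewrite mulr0n mulr0.
  by rewrite !mulr1n mulfV.
pose P := G *m D *m G^T.
have PP : P *m P = P.
  by rewrite /P -!mulmxA (mulmxA G^T G) GG (mulmxA (diag_mx c)) cD mul1mx !mulmxA.
have PT : P^T = P.
  by rewrite /P !trmx_mul trmxK tr_diag_mx mulmxA.
split.
  apply/eqP; rewrite eqn_leq; apply/andP; split.
    by apply: leq_trans (mxrankM_maxr _ _) (rank_leq_row _).
  have E : (D *m G^T) *m (G *m C) *m C^T = 1%:M.
    by rewrite -!mulmxA CC mulmx1 GG DcD.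
  rewrite -{1}(mxrank1 R r) -E.
  by apply: leq_trans (mxrankM_maxl _ _) (mxrankM_maxr _ _).
exists P; split.
  split=> //; split=> //.
  apply/andP; split.
    have -> : P = (G *m D *m C) *m (G *m C)^T.
      by rewrite trmx_mul mulmxA -(mulmxA _ C) CC mulmx1.
    exact: submxMl.
  have -> : (G *m C)^T = (G *m C)^T *m P.
    by rewrite /P trmx_mul -!mulmxA (mulmxA G^T G) GG (mulmxA (diag_mx c)) cD mul1mx.
  exact: submxMl.
rewrite /coherence_of_proj.
apply: le_trans bmu; apply: ler_wpM2l.
  by apply: divr_ge0; apply: ler0n.
apply: bigmax_le; first exact: b0.
move=> i _.
have -> : \sum_j P j i ^+ 2 = P i i.
  rewrite -{2}PP mxE; apply: eq_bigr => j _; by rewrite expr2 -{1}PT mxE.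
rewrite /P !mxE; apply: le_trans (Gb i).
rewrite le_eqVlt; apply/orP; left; apply/eqP/eq_bigr => j _.
by rewrite mul_mx_diag !mxE expr2 mulrAC.
Qed.
End Aux1.
Section Aux.
Variable R : rcfType.

Lemma pair_bound (d n m : nat) (q : {ffun m.-tuple ('I_d * 'I_n) -> R})
  (f : estimator R d n m) (X1 X2 : 'M[R]_(d,n)) (p : 'I_d * 'I_n) :
  is_distribution q -> is_randomized_map f -> X1 != X2 ->
  (forall a b, (a, b) != p -> X1 a b = X2 a b) ->
  1 - \sum_Om q Om * (p \in (Om : seq _))%:R <= error_prob f q X1 + error_prob f q X2.
Proof.
move=> [q0 q1] fr nX agr.
rewrite /error_prob.
have H : forall Om, q Om * f Om (observe X1 Om) X1 + q Om * f Om (observe X2 Om) X2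
   <= q Om + q Om * (p \in (Om : seq _))%:R.
  move=> Om; rewrite -mulrDr -{2}(mulr1 (q Om)) -mulrDr; apply: ler_wpM2l => //.
  have le1 : forall v X, f Om v X <= 1.
    by move=> v X; have := (fr Om v).2 [:: X] isT; rewrite big_seq1.
  case: (boolP (p \in (Om : seq _))) => pin.
    by rewrite addrC; apply: lerD; apply: le1.
  have -> : observe X2 Om = observe X1 Om.
    apply: eq_from_tnth => k; rewrite !tnth_map; case: (eqVneq (tnth Om k) p) => e.
      by move: pin; rewrite -e mem_tnth.
    by rewrite agr // -surjective_pairing.
  have := (fr Om (observe X1 Om)).2 [:: X1; X2]; rewrite /= inE andbT big_cons big_seq1 => h.
  by rewrite addr0; apply: h.
have S : \sum_Om (q Om * f Om (observe X1 Om) X1 + q Om * f Om (observe X2 Om) X2)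
   <= \sum_Om (q Om + q Om * (p \in (Om : seq _))%:R).
  by apply: ler_sum => Om _; apply: H.
rewrite big_split /= big_split /= q1 in S.
set A := \sum_Om _ in S; set B := \sum_Om _ in S; set Cc := \sum_Om _ in S.
rewrite /A /B /Cc in S *.
lra.
Qed.
End Aux.
Lemma count_ord (N a b : nat) : (a <= b)%N ->
  (\sum_(i < N) (a <= i < b)%N = minn b N - minn a N)%N.
Proof.
move=> ab; elim: N => [|N IH]; first by rewrite big_ord0 !minn0.
rewrite big_ord_recr /= IH.
case: (leqP a N) => aN; case: (ltnP N b) => Nb /=; lia.
Qed.

Section Blk.
Variables (d r' k : nat).
Hypothesis k0 : (0 < k)%N.
Hypothesis rkd : (r'.+1 * k <= d)%N.

Definition blk (i : 'I_d) : nat := if (i < r' * k)%N then (i %/ k)%N else r'.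

Lemma blk_lt i : (blk i < r'.+1)%N.
Proof. rewrite /blk; case: ifP => // h; apply: leq_trans (leqnSn _); rewrite ltn_divLR //. Qed.

Lemma blkE (i : 'I_d) (j : nat) : (j <= r')%N ->
  (blk i == j) = if (j < r')%N then (j * k <= i < j * k + k)%N else (r' * k <= i)%N.
Proof.
move=> jr; rewrite /blk; case: ifP => h; case: ifP => h2.
- by rewrite eqn_leq leq_divRL // -ltnS ltn_divLR // andbC mulSn addnC.
- have : (i %/ k < r')%N by rewrite ltn_divLR.
  move=> h3; have -> : j = r' by lia.
  by rewrite ltn_eqF // leqNgt h.
- rewrite gtn_eqF //; symmetry; apply/negbTE/negP => /andP [_ h4].
  move/negbT: h; rewrite -leqNgt => h.
  have : (j * k + k <= r' * k)%N by rewrite addnC -mulSn leq_mul2r h2 orbT.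
  lia.
- have -> : j = r' by lia.
  by rewrite eqxx leqNgt h.
Qed.

Definition cnt (j : nat) : nat := (\sum_(i < d) (blk i == j))%N.

Lemma cntE j : (j <= r')%N -> cnt j = if (j < r')%N then k else (d - r' * k)%N.
Proof.
move=> jr; rewrite /cnt; under eq_bigr => i _ do rewrite blkE //.
case: ifP => h.
  rewrite count_ord; last by lia.
  have h1 : (j * k + k <= d)%N.
    apply: leq_trans rkd; rewrite addnC -mulSn leq_mul2r; apply/orP; right; lia.
  lia.
under eq_bigr => i _ do rewrite -[(r' * k <= i)%N]andbT -(ltn_ord i).
rewrite count_ord; last by lia.
lia.
Qed.

Lemma cnt_ge j : (j <= r')%N -> (k <= cnt j)%N.
Proof.
move=> jr; rewrite cntE //; case: ifP => // _.
have := rkd; rewrite mulSn; lia.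
Qed.

Variable R : rcfType.

Definition Gm (s : R) (i0 : 'I_d) : 'M[R]_(d, r'.+1) :=
  \matrix_(i, j) (if blk i == j then (if (j == r' :> nat) && (i == i0) then s else 1) else 0).

Lemma GtG s i0 : s ^+ 2 = 1 ->
  (Gm s i0)^T *m Gm s i0 = diag_mx (\row_j ((cnt j)%:R : R)).
Proof.
move=> s2; apply/matrixP => j j'; rewrite !mxE.
case: (eqVneq j j') => [<-|njj].
  rewrite mulr1n /cnt natr_sum; apply: eq_bigr => i _; rewrite !mxE.
  case: (blk i == j) => /=; last by rewrite mul0r.
  by case: (_ && _); rewrite -expr2 ?s2 ?expr1n.
rewrite mulr0n; apply: big1 => i _; rewrite !mxE.
case: (eqVneq (blk i) j) => e; last by rewrite mul0r.
have -> : (blk i == j') = false.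
  by rewrite e; apply/negbTE; move: njj; apply: contra => /eqP h; apply/eqP/val_inj.
by rewrite mulr0.
Qed.

Lemma Gcoh s i0 i : s ^+ 2 = 1 ->
  \sum_j Gm s i0 i j ^+ 2 / (\row_j ((cnt j)%:R : R)) 0 j <= 1 / k%:R.
Proof.
move=> s2.
rewrite (bigD1 (Ordinal (blk_lt i))) //= big1; last first.
  move=> j nj; rewrite !mxE.
  have -> : (blk i == j) = false.
    apply/negbTE; move: nj; apply: contra => /eqP h; apply/eqP/val_inj => /=. by [].
  by rewrite expr0n /= mul0r.
rewrite !mxE /= eqxx addr0.
have -> : (if (blk i == r') && (i == i0) then s else 1) ^+ 2 = 1.
  by case: (_ && _); rewrite ?s2 ?expr1n.
have ck : (k <= cnt (blk i))%N by apply: cnt_ge; rewrite -ltnS blk_lt.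
rewrite !div1r lef_pV2 ?ler_nat //; rewrite posrE ltr0n //.
lia.
Qed.

Variables (n : nat) (t0 : 'I_n).
Hypothesis rn : (r'.+1 <= n)%N.
Hypothesis t0r : (r' <= t0)%N.

Definition col (j : 'I_r'.+1) : 'I_n := if (j < r')%N then widen_ord rn j else t0.

Lemma col_val j : (col j : nat) = if (j < r')%N then (j : nat) else (t0 : nat).
Proof. by rewrite /col; case: ifP. Qed.

Lemma col_eq j j' : (col j == col j') = (j == j').
Proof.
apply/eqP/eqP => [e|->] //; apply/val_inj.
have := congr1 (@nat_of_ord n) e; rewrite !col_val.
have := ltn_ord j; have := ltn_ord j'.
case: ifP; case: ifP => /= ? ?; lia.
Qed.

Definition Cm : 'M[R]_(r'.+1, n) := \matrix_(j, t) (t == col j)%:R.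

Lemma CCt : Cm *m Cm^T = 1%:M.
Proof.
apply/matrixP => j j'; rewrite !mxE (bigD1 (col j)) //= big1; last first.
  by move=> t /negbTE nt; rewrite !mxE nt mul0r.
by rewrite !mxE eqxx mul1r addr0 col_eq eq_sym.
Qed.

Lemma X_at s i0 : blk i0 = r' -> (Gm s i0 *m Cm) i0 t0 = s.
Proof.
move=> bi; rewrite !mxE (bigD1 ord_max) //= big1; last first.
  move=> j nj; rewrite !mxE.
  have -> : (t0 == col j) = false.
    apply/negbTE; rewrite eq_sym -(inj_eq val_inj) /= col_val.
    have : (j < r')%N.
      have := ltn_ord j; move: nj; rewrite -(inj_eq val_inj) /= => nj ?; lia.
    move=> jr; rewrite jr; apply/negP => /eqP ?; lia.
  by rewrite mulr0.
rewrite !mxE addr0; have -> : col ord_max = t0 by rewrite /col /= ltnn.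
by rewrite bi !eqxx /= mulr1.
Qed.

Lemma X_agree i0 a b : blk i0 = r' -> (a, b) != (i0, t0) ->
  (Gm 1 i0 *m Cm) a b = (Gm (-1) i0 *m Cm) a b.
Proof.
move=> bi nab; rewrite !mxE; apply: eq_bigr => j _; rewrite !mxE.
case: (eqVneq a i0) => [ea|na]; last by rewrite andbF.
case: (eqVneq (j : nat) r') => ej /=; last by [].
have -> : (b == col j) = false.
  have -> : col j = t0 by rewrite /col ej ltnn.
  by apply/negbTE; move: nab; rewrite ea; apply: contra => /eqP ->.
by rewrite !mulr0.
Qed.

End Blk.

Theorem theorem2 (R : rcfType) (d n r m : nat) (mu0 : R) :
  (1 <= r)%N -> (r < n)%N -> (d <= n)%N -> 1 <= mu0 ->
  (exists k : nat, (0 < k)%N /\ d%:R / (r%:R * mu0) = k%:R :> R) ->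
  forall K : nat,
    is_ceil (m%:R / ((1 - (r%:R - 1) / (r%:R * mu0)) * d%:R)) K ->
  forall (q : {ffun m.-tuple ('I_d * 'I_n) -> R}) (f : estimator R d n m),
    is_distribution q -> is_randomized_map f ->
  forall eps : R, 0 < eps ->
    exists X : 'M[R]_(d, n),
      in_classX r mu0 X /\
      1 / 2 - K%:R / (2 * (n - r)%:R) - eps < error_prob f q X.
Proof.
move=> r1 rn dn mu1 [k [k0 hk]] K [_ hK] q f qd fr eps eps0.
case: r r1 rn hk hK => [//|r'] _ rn hk hK.
have x0 : 0 < r'.+1%:R * mu0 :> R.
  by apply: mulr_gt0; [rewrite ltr0n | apply: lt_le_trans mu1].
have mu0ne : mu0 != 0 by rewrite gt_eqF // (lt_le_trans ltr01 mu1).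
have hd : d%:R = k%:R * (r'.+1%:R * mu0) :> R by rewrite -hk divfK // gt_eqF.
have rkd : (r'.+1 * k <= d)%N.
  rewrite -(ler_nat R) natrM hd.
  rewrite mulrA [_ * r'.+1%:R]mulrC -{1}(mulr1 (r'.+1%:R * k%:R)).
  by apply: ler_wpM2l => //; apply: mulr_ge0; apply: ler0n.
have rkd' : (r' * k <= d)%N by move: rkd; rewrite mulSn; lia.
have kL : (k <= d - r' * k)%N by move: rkd; rewrite mulSn; lia.
set L := (d - r' * k)%N in kL.
have hL : L%:R = (1 - (r'.+1%:R - 1) / (r'.+1%:R * mu0)) * d%:R :> R.
  have e : r'.+1%:R = r'%:R + 1 :> R by rewrite natr1.
  rewrite /L natrB // natrM hd e; rewrite e in x0; field.
  by rewrite mu0ne natr1 pnatr_eq0.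
have L0 : 0 < L%:R :> R by rewrite ltr0n; lia.
have mK : m%:R <= K%:R * L%:R :> R by rewrite -ler_pdivrMr // hL.
have nr0 : 0 < (n - r'.+1)%:R :> R by rewrite ltr0n subn_gt0.
set beta := 1 / 2 - K%:R / (2 * (n - r'.+1)%:R) - eps.
case: (classic (exists X : 'M_(d, n), in_classX r'.+1 mu0 X /\ beta < error_prob f q X)) => // nH.
have H : forall X, in_classX r'.+1 mu0 X -> error_prob f q X <= beta.
  move=> X cX; rewrite leNgt; apply/negP => lt; by apply: nH; exists X.
pose Pr (i0 : 'I_d) (t0 : 'I_n) := \sum_Om q Om * ((i0, t0) \in (Om : seq _))%:R.
have rn' : (r' < n)%N by lia.
have key : forall (i0 : 'I_d) (t0 : 'I_n), blk d r' k i0 == r' -> (r' <= t0)%N ->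
    1 - Pr i0 t0 <= 2 * beta.
  move=> i0 t0 /eqP bi t0r.
  have inC : forall s : R, s ^+ 2 = 1 ->
      in_classX r'.+1 mu0 (Gm d r' k R s i0 *m Cm r' R n t0 rn').
    move=> s s2; apply: (@class_GC _ _ _ _ _ (1 / k%:R) _ _ (\row_j ((cnt d r' k j)%:R : R))).
    - exact: GtG.
    - move=> j; rewrite mxE pnatr_eq0 -lt0n.
      exact: leq_trans (k0) (@cnt_ge d r' k (k0) (rkd) j (ltnSE (ltn_ord j))).
    - exact: (@CCt d r' k k0 rkd R n t0 rn' t0r).
    - by move=> i; apply: Gcoh.
    - by rewrite div1r invr_ge0 ler0n.
    - rewrite hd le_eqVlt; apply/orP; left; apply/eqP; field.
      by rewrite pnatr_eq0 -lt0n k0 /= addrC natr1 pnatr_eq0.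
  have e1 := H _ (inC 1 (expr1n _ _)).
  have s2 : (-1 : R) ^+ 2 = 1 by rewrite sqrrN expr1n.
  have e2 := H _ (inC (-1) s2).
  have h := @pair_bound R d n m q f (Gm d r' k R 1 i0 *m Cm r' R n t0 rn')
     (Gm d r' k R (-1) i0 *m Cm r' R n t0 rn') (i0, t0) qd fr.
  have neq : Gm d r' k R 1 i0 *m Cm r' R n t0 rn' != Gm d r' k R (-1) i0 *m Cm r' R n t0 rn'.
    apply/eqP => e; have := congr1 (fun M : 'M_(d, n) => M i0 t0) e.
    rewrite /= !(@X_at d r' k k0 rkd) // => h'; lra.
  have := h neq (fun a b nab => @X_agree d r' k R n t0 rn' i0 a b bi nab).
  rewrite /Pr; lra.
pose SB := fun i0 : 'I_d => blk d r' k i0 == r'.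
pose ST := fun t0 : 'I_n => (r' <= t0)%N.
have S1 : \sum_(i0 | SB i0) \sum_(t0 | ST t0) (1 - Pr i0 t0)
    <= \sum_(i0 | SB i0) \sum_(t0 | ST t0) (2 * beta).
  by apply: ler_sum => i0 hi; apply: ler_sum => t0 ht; apply: key.
have cB : \sum_(i0 | SB i0) (1:R) = L%:R.
  rewrite big_mkcond /=.
  have -> : L = cnt d r' k r' by rewrite (@cntE d r' k k0 rkd r' (leqnn _)) ltnn.
  rewrite /cnt natr_sum; apply: eq_bigr => i _; rewrite /SB; by case: (_ == _).
have cT : \sum_(t0 | ST t0) (1:R) = (n - r')%:R.
  rewrite big_mkcond /=.
  have -> : (n - r')%N = (minn n n - minn r' n)%N by rewrite minnn (minn_idPl (ltnW rn')).
  rewrite -count_ord; last exact: ltnW rn'.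
  rewrite natr_sum; apply: eq_bigr => i _; rewrite /ST ltn_ord andbT.
  by case: (_ <= _)%N.
have Pr0 : forall i t, 0 <= Pr i t.
  move=> i t; apply: sumr_ge0 => Om _; apply: mulr_ge0; [exact: qd.1 | exact: ler0n].
have subsum : forall (I : finType) (P : pred I) (F : I -> R), (forall i, 0 <= F i) ->
    \sum_(i | P i) F i <= \sum_i F i.
  move=> I P F F0; rewrite [X in _ <= X](bigID P) /= lerDl; exact: sumr_ge0.
have SPr : \sum_(i0 | SB i0) \sum_(t0 | ST t0) Pr i0 t0 <= m%:R.
  apply: (@le_trans _ _ (\sum_i0 \sum_t0 Pr i0 t0)).
    apply: le_trans (subsum _ _ _ _).
      by apply: ler_sum => i _; apply: subsum.
    by move=> i; apply: sumr_ge0 => t _.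
  have -> : \sum_i0 \sum_t0 Pr i0 t0
      = \sum_Om q Om * \sum_i0 \sum_t0 ((i0, t0) \in (Om : seq _))%:R.
    rewrite /Pr; under eq_bigr => i _ do rewrite exchange_big /=.
    rewrite exchange_big /=; apply: eq_bigr => Om _.
    rewrite mulr_sumr; apply: eq_bigr => i _; by rewrite mulr_sumr.
  apply: (@le_trans _ _ (\sum_Om q Om * m%:R)); last by rewrite -mulr_suml qd.2 mul1r.
  apply: ler_sum => Om _; apply: ler_wpM2l; first exact: qd.1.
  rewrite pair_bigA /=.
  have -> : \sum_p ((p.1, p.2) \in (Om : seq _))%:R = (#|Om|)%:R :> R.
    rewrite -sum1_card natr_sum [RHS]big_mkcond /=; apply: eq_bigr => p _.
    by rewrite -surjective_pairing; case: (_ \in _).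
  by rewrite ler_nat; apply: leq_trans (card_size _) _; rewrite size_tuple.
have ccB : forall c : R, \sum_(i0 | SB i0) c = L%:R * c.
  by move=> c; rewrite -cB mulr_suml; apply: eq_bigr => *; rewrite mul1r.
have ccT : forall c : R, \sum_(t0 | ST t0) c = (n - r')%:R * c.
  by move=> c; rewrite -cT mulr_suml; apply: eq_bigr => *; rewrite mul1r.
have E1 : \sum_(i0 | SB i0) \sum_(t0 | ST t0) (1 - Pr i0 t0)
    = L%:R * (n - r')%:R - \sum_(i0 | SB i0) \sum_(t0 | ST t0) Pr i0 t0.
  under eq_bigr => i _ do rewrite sumrB cT.
  by rewrite sumrB ccB.
have E2 : \sum_(i0 | SB i0) \sum_(t0 | ST t0) (2 * beta) = L%:R * ((n - r')%:R * (2 * beta)).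
  under eq_bigr => i _ do rewrite ccT.
  by rewrite ccB.
rewrite E1 E2 in S1.
have nrel : (n - r')%:R = (n - r'.+1)%:R + 1 :> R.
  rewrite natr1; congr (_%:R); lia.
rewrite nrel in S1.
move: S1 SPr mK; rewrite /beta.
set P := \sum_(i0 | SB i0) _.
set Nr := (n - r'.+1)%:R; set Lr := L%:R; set Kr := K%:R.
have ident : Lr * ((Nr + 1) * (2 * (1 / 2 - Kr / (2 * Nr) - eps)))
   = Lr * (Nr + 1) - Kr * Lr - Kr * Lr / Nr - 2 * (eps * (Lr * (Nr + 1))).
  by field; apply: lt0r_neq0.
rewrite ident.
have w0 : 0 <= Kr * Lr / Nr.
  by apply: divr_ge0; [apply: mulr_ge0; [apply: ler0n | apply: ltW] | apply: ltW].
have z0 : 0 < eps * (Lr * (Nr + 1)).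
  apply: mulr_gt0 => //; apply: mulr_gt0 => //; lra.
move: w0 z0.
set w := Kr * Lr / Nr; set z := eps * _; set u := Lr * (Nr + 1); set KL := Kr * Lr.
lra.
Qed.
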